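(* Let $0<\Delta<1$, let $\mathcal{X}_\Delta=\{X\in\mathcal{X}:\mu_X(\{x\})<\Delta\text{ for all }x\in X\}$, and define $r_\Delta\colon\mathcal{X}_\Delta\to\mathbb{R}_+$ by $r_\Delta(X)=\int_0^{(\Delta+1)/2}\mathrm{diam}(X;s)\,ds$. Then $r_\Delta$ is continuous on $\mathcal{X}_\Delta$ with respect to the box topology.
   Context: mm-spaces are triples $(X,d_X,\mu_X)$ with $(X,d_X)$ complete separable metric and $\mu_X$ a Borel probability measure, with $X=\operatorname{supp}\mu_X$. $\mathcal{X}$ is the set of their isomorphism classes under measure-preserving isometries of supports. Box distance: $\square(X,Y)$ is the infimum of $\varepsilon\ge0$ such that there exist Borel maps $\varphi,\psi$ from $[0,1)$ pushing Lebesgue measure to $\mu_X,\mu_Y$ and a Borel $I_0$ of measure $\ge1-\varepsilon$ with $|d_X(\varphi(s),\varphi(t))-d_Y(\psi(s),\psi(t))|\le\varepsilon$ on $I_0$. It induces the box topology. Partial diameter: $\mathrm{diam}(X;\alpha)=\inf\{\mathrm{diam}A: A\subset X\text{ Borel},\ \mu_X(A)\ge\alpha\}$. For $X\in\mathcal{X}_\Delta$ one has $0<r_\Delta(X)<\infty$. *)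

(* Defs.v *)
From HB Require Import structures.
From mathcomp Require Import all_boot all_order all_algebra.
From mathcomp Require Import all_classical all_reals all_analysis.
Set Implicit Arguments. Unset Strict Implicit. Unset Printing Implicit Defensive.
Import Order.TTheory GRing.Theory Num.Theory.
Local Open Scope classical_set_scope.
Local Open Scope ring_scope.

Section MM.
Context {R : realType} {d : measure_display} {T : measurableType d}.
Variable dist : T -> T -> R.

Definition dball (x : T) (r : R) : set T := [set y | dist x y < r].
Definition dopen (U : set T) : Prop :=
  forall x, U x -> exists2 r : R, 0 < r & dball x r `<=` U.
Definition is_metric : Prop :=
  [/\ forall x y, dist x y = 0 <-> x = y,
      forall x y, dist x y = dist y x &
      forall x y z, dist x z <= dist x y + dist y z].
Definition dcomplete : Prop :=
  forall u : nat -> T,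
    (forall e : R, 0 < e -> exists N, forall m n, (N <= m)%N -> (N <= n)%N -> dist (u m) (u n) < e) ->
    exists l, forall e : R, 0 < e -> exists N, forall n, (N <= n)%N -> dist (u n) l < e.
Definition dseparable : Prop :=
  exists D : set T, countable D /\
    forall x (e : R), 0 < e -> exists2 y, D y & dist x y < e.
Definition borel_of_dist : Prop := (@measurable d T) = <<s dopen >>.

Variable mu : probability T R.
Definition full_support : Prop :=
  forall x (r : R), 0 < r -> (0 < mu (dball x r))%E.

Definition is_mmspace : Prop :=
  [/\ is_metric, dcomplete, dseparable, borel_of_dist & full_support].

Definition in_XDelta (Delta : R) : Prop :=
  forall x, (mu [set x] < EFin Delta)%E.

Definition ediam (A : set T) : \bar R :=
  ereal_sup ([set (dist x y)%:E | x in A & y in A] `|` [set 0%E]).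

Definition pdiam (alpha : R) : \bar R :=
  ereal_inf [set ediam A | A in [set A | measurable A /\ (alpha%:E <= mu A)%E]].

Definition rDelta (Delta : R) : \bar R :=
  (\int[@lebesgue_measure R]_(s in `[0%R, ((Delta + 1) / 2)%R]) pdiam s)%E.

Definition parametrization (phi : R -> T) : Prop :=
  measurable_fun (`[0, 1[ : set R) phi /\
  forall B, measurable B -> @lebesgue_measure R (`[0, 1[ `&` phi @^-1` B) = mu B.
End MM.

Definition box_cond {R : realType} {dX dY : measure_display}
  {TX : measurableType dX} {TY : measurableType dY}
  (distX : TX -> TX -> R) (muX : probability TX R)
  (distY : TY -> TY -> R) (muY : probability TY R) (eps : R) : Prop :=
  0 <= eps /\
  exists (phi : R -> TX) (psi : R -> TY) (I0 : set R),
    [/\ parametrization muX phi, parametrization muY psi,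
        measurable I0 /\ I0 `<=` `[0, 1[,
        ((1 - eps)%:E <= @lebesgue_measure R I0)%E &
        forall s t, I0 s -> I0 t ->
          `|distX (phi s) (phi t) - distY (psi s) (psi t)| <= eps].

Definition box_dist {R : realType} {dX dY : measure_display}
  {TX : measurableType dX} {TY : measurableType dY}
  (distX : TX -> TX -> R) (muX : probability TX R)
  (distY : TY -> TY -> R) (muY : probability TY R) : \bar R :=
  ereal_inf [set eps%:E | eps in box_cond distX muX distY muY].

(* Main.v *)
Require Import Defs.
From HB Require Import structures.
From mathcomp Require Import all_boot all_order all_algebra.
From mathcomp Require Import all_classical all_reals all_analysis.
From mathcomp Require Import ring lra measurable_realfun.
Import Order.TTheory GRing.Theory Num.Theory.
Local Open Scope classical_set_scope.
Local Open Scope ring_scope.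
Section A.
Context {R : realType} {d : measure_display} {T : measurableType d}.
Variables (dist : T -> T -> R) (mu : probability T R).

Lemma ediam_ge0 (A : set T) : (0 <= ediam dist A)%E.
Proof. by apply: ereal_sup_ubound; right. Qed.

Lemma pdiam_ge0 s : (0 <= pdiam dist mu s)%E.
Proof. by apply: le_ereal_inf_tmp => _ [A _ <-]; exact: ediam_ge0. Qed.

Lemma pdiam_nd s t : s <= t -> (pdiam dist mu s <= pdiam dist mu t)%E.
Proof.
move=> st; apply: le_ereal_inf => _ [A [mA muA] <-]; exists A => //; split => //.
by apply: le_trans muA; rewrite lee_fin.
Qed.

Lemma ediam_le (A : set T) (M : \bar R) : (0 <= M)%E ->
  (forall x y, A x -> A y -> ((dist x y)%:E <= M)%E) -> (ediam dist A <= M)%E.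
Proof.
move=> M0 H; apply: ge_ereal_sup => z [[x Ax [y Ay <-]]|->] //.
exact: H.
Qed.

Lemma dopen_meas : borel_of_dist dist -> forall U, dopen dist U -> measurable U.
Proof. by move=> hb U hU; rewrite hb; apply: sub_sigma_algebra. Qed.

End A.
Section A2.
Context {R : realType} {d : measure_display} {T : measurableType d}.
Variables (dist : T -> T -> R) (mu : probability T R).
Hypothesis hm : is_metric dist.
Hypothesis hb : borel_of_dist dist.

Lemma dist_ge0 x y : 0 <= dist x y.
Proof.
case: hm => h0 hs ht.
have := ht x y x; rewrite (hs y x) (proj2 (h0 x x) erefl) => H.
by rewrite -(pmulr_rge0 _ (ltr0n R 2)) mulr2n mulrDl mul1r.
Qed.

Lemma dball_open x r : dopen dist (dball dist x r).
Proof.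
case: hm => h0 hs ht.
move=> y /= xy; exists (r - dist x y); first by rewrite subr_gt0.
move=> z /= yz; apply: le_lt_trans (ht x y z) _.
by rewrite -ltrBrDl.
Qed.

Lemma dball_meas x r : measurable (dball dist x r).
Proof. exact: (@dopen_meas _ _ _ dist hb _ (dball_open x r)). Qed.

Lemma pdiam_fin s : s < 1 -> (pdiam dist mu s < +oo)%E.
Proof.
move=> s1.
have [x0 _] : exists x : T, True.
  case: (pselect (exists x : T, True)) => // nT; exfalso.
  have E : [set: T] = set0 by apply/seteqP; split => // x _; apply: nT; exists x.
  by have := probability_setT mu; rewrite E measure0 => /esym/eqP; rewrite eqe oner_eq0.
pose B n := dball dist x0 n%:R.
have mB n : measurable (B n) by exact: dball_meas.
have UB : \bigcup_n B n = setT.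
  apply/seteqP; split => // y _; exists (Num.truncn (dist x0 y)).+1 => //.
  by rewrite /B /dball /= truncnS_gt.
have ndB : nondecreasing_seq B.
  by move=> n m nm; apply/subsetPset => y; rewrite /B /dball /= => H; apply: lt_le_trans H _; rewrite ler_nat.
have mU : measurable (\bigcup_n B n) by rewrite UB.
have cv : (mu \o B) @ \oo --> 1%E.
  by rewrite -(probability_setT mu) -UB; exact: nondecreasing_cvg_mu.
have ndmu : nondecreasing_seq (mu \o B) by move=> n m nm; apply: le_measure; rewrite ?inE //; exact/subsetPset/ndB.
have s1' : (s%:E < 1)%E by rewrite lte_fin.
have := lte_lim ndmu (cvgP _ cv); rewrite (cvg_lim _ cv) // => /(_ s s1') [N _ HN].
have muN := HN N (leqnn N).
apply: (@le_lt_trans _ _ (ediam dist (B N))).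
  by apply: ereal_inf_lbound; exists (B N).
apply: (@le_lt_trans _ _ (N%:R *+ 2)%:E); last exact: ltry.
apply: ediam_le; first by rewrite lee_fin mulrn_wge0.
move=> x y; rewrite /B /dball /= => hx hy; rewrite lee_fin.
case: hm => h0 hs ht.
apply: le_trans (ht x x0 y) _; rewrite hs mulr2n lerD // ltW //.
Qed.

End A2.
Lemma leb01 {R : realType} : (@lebesgue_measure R (`[0%R, 1%R[) = 1)%E.
Proof. by rewrite lebesgue_measure_itv /= lte01 oppr0 adde0. Qed.

Section B.
Context {R : realType} {dX dY : measure_display}
  {TX : measurableType dX} {TY : measurableType dY}.
Variables (distX : TX -> TX -> R) (muX : probability TX R)
  (distY : TY -> TY -> R) (muY : probability TY R).
Hypothesis hmX : is_metric distX.
Hypothesis hbX : borel_of_dist distX.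
Variables (phi : R -> TX) (psi : R -> TY) (I0 : set R) (eps : R).
Hypothesis hphi : parametrization muX phi.
Hypothesis hpsi : parametrization muY psi.
Hypothesis eps0 : 0 <= eps.
Hypothesis mI0 : measurable I0.
Hypothesis sI0 : I0 `<=` `[0%R, 1%R[.
Hypothesis lI0 : ((1 - eps)%:E <= @lebesgue_measure R I0)%E.
Hypothesis hI0 : forall s t, I0 s -> I0 t ->
  `|distX (phi s) (phi t) - distY (psi s) (psi t)| <= eps.

Local Notation leb := (@lebesgue_measure R).

Lemma cross_set (A : set TY) (t : R) : measurable A -> ((t + eps)%:E <= muY A)%E ->
  (pdiam distX muX t <= ediam distY A + eps%:E)%E.
Proof.
move=> mA hA.
pose P := `[0%R, 1%R[ `&` psi @^-1` A.
have mP : measurable P by apply: hpsi.1 => //.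
pose J := P `&` I0.
have mJ : measurable J by apply: measurableI.
pose D := `[0%R, 1%R[ `&` ~` I0.
have mD : measurable D by apply: measurableI => //; apply: measurableC.
have lD : (leb D <= eps%:E)%E.
  have E : `[0%R, 1%R[%classic = I0 `|` D.
    apply/seteqP; split => x; first by case: (pselect (I0 x)) => ?; [left|right].
    by case => [/sI0|[]].
  have : leb `[0%R, 1%R[ = (leb I0 + leb D)%E.
    by rewrite E; apply: measureU => //; apply/seteqP; split => x // [? [_ ?]].
  rewrite leb01.
  move: lI0 (measure_ge0 leb D) (measure_ge0 leb I0).
  case: (leb D) => [r| |]; case: (leb I0) => [q| |] //.
  rewrite !lee_fin => h1 h3 h4 /esym/eqP; rewrite eqe => /eqP h2.
  lra.
have lJ : (t%:E <= leb J)%E.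
  have PJD : P `<=` J `|` D.
    move=> x [x01 xA]; case: (pselect (I0 x)) => ?; [left|right] => //.
  rewrite -(hpsi.2 A mA) in hA.
  have H1 : ((t + eps)%:E <= leb J + leb D)%E.
    apply: le_trans hA (le_trans (le_measure leb _ _ PJD) (measureU2 leb mJ mD)).
    - by rewrite inE.
    - by rewrite inE; apply: measurableU.
  have JJ : (leb J <= 1)%E.
    rewrite -leb01; apply: le_measure; rewrite ?inE //.
    by move=> x [[]].
  move: lD JJ H1 (measure_ge0 leb D) (measure_ge0 leb J).
  case: (leb D) => [r| |] //; case: (leb J) => [q| |] //.
  move=> h1 h2 h3 _ _; rewrite lee_fin; rewrite lee_fin in h1.
  have h2' : q <= 1 by rewrite -lee_fin.
  have h3' : t + eps <= q + r by rewrite -lee_fin EFinD.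
  lra.
pose B := [set x | forall r, 0 < r -> exists2 s, J s & distX x (phi s) < r].
case: hmX => h0 hs ht.
have mB : measurable B.
  rewrite -(setCK B); apply: measurableC; apply: (@dopen_meas _ _ _ distX hbX).
  move=> x /= /existsNP [r /not_implyP [r0 H]].
  exists (r / 2); first by rewrite divr_gt0.
  move=> y /= xy ys; apply: H.
  have [s Js ys'] := ys (r / 2) (divr_gt0 r0 (ltr0Sn _ 1)).
  exists s => //; apply: le_lt_trans (ht x y (phi s)) _.
  by rewrite [r](splitr r) ltrD.
have muB : (t%:E <= muX B)%E.
  apply: (le_trans lJ); rewrite -hphi.2 //; apply: le_measure; rewrite ?inE //.
  - by apply: hphi.1.
  - move=> s Js; split; first by case: Js => -[].
    move=> r r0; exists s => //; by rewrite (proj2 (h0 _ _) erefl).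
apply: (@le_trans _ _ (ediam distX B)).
  by apply: ereal_inf_lbound; exists B.
case EA : (ediam distY A) => [a| |]; last first.
- by have := ediam_ge0 distY A; rewrite EA.
- by rewrite addye ?leey.
have a0 : 0 <= a by rewrite -lee_fin -EA ediam_ge0.
apply: ediam_le; first by rewrite -EFinD lee_fin addr_ge0.
move=> x y Bx By; rewrite lee_fin; apply/ler_addgt0Pr => r r0.
have [s Js xs] := Bx (r / 2) (divr_gt0 r0 (ltr0Sn _ 1)).
have [u Ju yu] := By (r / 2) (divr_gt0 r0 (ltr0Sn _ 1)).
have I0s : I0 s by case: Js.
have I0u : I0 u by case: Ju.
have Asu : (distY (psi s) (psi u) <= a).
  rewrite -lee_fin -EA; apply: ereal_sup_ubound; left.
  by exists (psi s); [case: Js => -[] | exists (psi u) => //; case: Ju => -[]].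
have := hI0 _ _ I0s I0u; rewrite ler_norml => /andP[_ h].
have t1 := ht x (phi s) y.
have t2 := ht (phi s) (phi u) y.
rewrite (hs (phi u) y) in t2.
lra.
Qed.
End B.
Section C.
Context {R : realType}.
Local Notation leb := (@lebesgue_measure R).

Lemma int_le_cst (G : R -> \bar R) (D : set R) (b : R) : measurable D ->
  (forall x, D x -> (x <= b)%R) -> (forall s, (0 <= G s)%E) ->
  {homo G : s t / s <= t >-> (s <= t)%E} -> measurable_fun D G ->
  (\int[leb]_(x in D) G x <= G b * leb D)%E.
Proof.
move=> mD Db G0 Gnd mG.
rewrite -integral_cst //; apply: ge0_le_integral => //.
by move=> x Dx; apply: Gnd; apply: Db.
Qed.

Lemma int_ge_cst (F : R -> \bar R) (D : set R) (a : R) : measurable D ->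
  (forall x, D x -> (a <= x)%R) -> (forall s, (0 <= F s)%E) ->
  {homo F : s t / s <= t >-> (s <= t)%E} -> measurable_fun D F ->
  (F a * leb D <= \int[leb]_(x in D) F x)%E.
Proof.
move=> mD Da F0 Fnd mF.
rewrite -integral_cst //; apply: ge0_le_integral => //.
all: try (by move=> *; exact: F0).
all: try (by move=> x Dx; apply: Fnd; apply: Da).

Qed.

Lemma leb_oc (a b : R) : (a <= b)%R -> leb `]a, b] = (b - a)%:E.
Proof.
move=> ab; rewrite lebesgue_measure_itv /= lte_fin.
case: ltP => [_|ba] /=; first by rewrite EFinB.
have -> : b = a by apply/eqP; rewrite eq_le ab ba.
by rewrite subrr.
Qed.

Lemma leb_cc0 (a : R) : leb `[a, a] = 0%E.
Proof. by rewrite lebesgue_measure_itv /= lte_fin ltxx. Qed.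

End C.
Section C2.
Context {R : realType}.
Local Notation leb := (@lebesgue_measure R).

Lemma rearr (x1 x2 x3 x4 x5 x6 y : \bar R) : (x2 <= y)%E ->
  (x1 + x2 + x3 + x4 + (x5 + x6) <= x1 + y + x3 + x5 + (x4 + x6))%E.
Proof.
move=> h.
have -> : (x1 + x2 + x3 + x4 + (x5 + x6) = x1 + x2 + x3 + x5 + (x4 + x6))%E.
  by rewrite -!addeA; congr (_ + (_ + (_ + _)))%E; rewrite addeCA.
apply: leeD; last exact: lexx.
apply: leeD; last exact: lexx.
apply: leeD; last exact: lexx.
by apply: leeD; first exact: lexx.
Qed.

Lemma int_cmp (F G : R -> \bar R) (c del : R) (N : nat) :
  0 < c -> (0 < N)%N -> 0 <= del -> del <= c / N%:R ->
  (forall s, (0 <= F s)%E) -> (forall s, (0 <= G s)%E) ->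
  {homo F : s t / s <= t >-> (s <= t)%E} -> {homo G : s t / s <= t >-> (s <= t)%E} ->
  measurable_fun `[0, c] F -> measurable_fun `[0, c] G ->
  (forall s, (G s <= F (s + del)%R + del%:E)%E) ->
  (\int[leb]_(x in `[0%R, c]) G x <= \int[leb]_(x in `[0%R, c]) F x
     + F c * (c / N%:R)%:E + F (c + c / N%:R)%R * (c / N%:R)%:E + (c * del)%:E)%E.
Proof.
move=> c0 N0 d0 dh F0 G0 Fnd Gnd mF mG GF.
set h := c / N%:R.
have h0 : 0 < h by rewrite divr_gt0 // ltr0n.
have Nh : N%:R * h = c by rewrite /h mulrC divfK // pnatr_eq0 -lt0n.
suff Q : forall k, (k <= N)%N ->
  (\int[leb]_(x in `[0%R, (k%:R * h)%R]) G x <= \int[leb]_(x in `[0%R, (k%:R * h)%R]) F x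
     + F (k%:R * h)%R * h%:E + F (k%:R * h + h)%R * h%:E + (k%:R * h * del)%:E)%E.
  by have := Q N (leqnn N); rewrite Nh.
elim => [_|k IH kN].
  rewrite mul0r.
  apply: (@le_trans _ _ 0%E).
    have := @int_le_cst R G `[0%R, 0%R] 0 (measurable_itv _).
    rewrite leb_cc0 mule0; apply => //.
    - by move=> x; rewrite /= in_itv /= => /andP[].
    - apply: (measurable_funS (measurable_itv _) _ mG); apply: subitvP; rewrite subitvE !bnd_simp; exact: ltW.
  rewrite mul0r; apply: adde_ge0; last by rewrite lee_fin.
  apply: adde_ge0; last by apply: mule_ge0 => //; rewrite lee_fin ltW.
  apply: adde_ge0; last by apply: mule_ge0 => //; rewrite lee_fin ltW.
  by apply: integral_ge0 => x _.
have IH' := IH (ltnW kN).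
have ->: k.+1%:R * h = k%:R * h + h by rewrite -natr1 mulrDl mul1r.
set a := k%:R * h in IH' *.
set b := a + h.
have a0 : 0 <= a by rewrite /a mulr_ge0 // ltW.
have ab : a <= b by rewrite /b lerDl ltW.
have bc : b <= c.
  rewrite -Nh /b /a -[X in _ + X](mul1r h) -mulrDl natr1.
  by apply: ler_wpM2r; [exact: ltW | rewrite ler_nat].
have E : `[0, b]%classic = `[0, a]%classic `|` `]a, b]%classic.
  by apply: itv_bndbnd_setU; rewrite bnd_simp.
have sc : `[0, b]%classic `<=` `[0, c]%classic.
  by apply: subitvP; rewrite subitvE !bnd_simp.
have dj : [disjoint `[0, a]%classic & `]a, b]%classic].
  rewrite disj_set2E; apply/eqP/seteqP; split => // x [].
  by rewrite /= !in_itv /= => /andP[_ xa] /andP[ax _]; move: (lt_le_trans ax xa); rewrite ltxx.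
have mUF : measurable_fun (`[0, a]%classic `|` `]a, b]%classic) F.
  by rewrite -E; apply: (measurable_funS (measurable_itv _) sc mF).
have mUG : measurable_fun (`[0, a]%classic `|` `]a, b]%classic) G.
  by rewrite -E; apply: (measurable_funS (measurable_itv _) sc mG).
rewrite E !ge0_integral_setU //.
have g2 : (\int[leb]_(x in `]a, b]%classic) G x <= F (b + h)%R * h%:E + (del * h)%:E)%E.
  apply: (@le_trans _ _ (G b * leb `]a, b]%classic)%E).
    apply: int_le_cst => //.
    - by move=> x; rewrite /= in_itv /= => /andP[].
    - apply: (measurable_funS _ _ mUG); [by rewrite -E | by move=> x; right].
  rewrite leb_oc // /b addrAC subrr add0r (EFinM del h) -ge0_muleDl; [ | exact: F0 | exact: d0].
  apply: lee_wpmul2r; first by rewrite lee_fin ltW.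
  apply: le_trans (GF _) _; apply: leeD; last exact: lexx.
  by apply: Fnd; rewrite lerD2l.
have f2 : (F a * h%:E <= \int[leb]_(x in `]a, b]%classic) F x)%E.
  apply: (@le_trans _ _ (F a * leb `]a, b]%classic)%E).
    by rewrite leb_oc // /b addrAC subrr add0r lexx.
  apply: int_ge_cst => //.
  - by move=> x; rewrite /= in_itv /= => /andP[/ltW].
  - apply: (measurable_funS _ _ mUF); [by rewrite -E | by move=> x; right].
apply: le_trans (leeD IH' g2) _.
rewrite /b mulrDl EFinD [h * del]mulrC.
exact: rearr.
Qed.

End C2.
Section D.
Context {R : realType} {d : measure_display} {T : measurableType d}.
Variables (dist : T -> T -> R) (mu : probability T R).
Hypothesis hm : is_metric dist.
Hypothesis hb : borel_of_dist dist.

Lemma pdiam_finE s : s < 1 -> pdiam dist mu s \is a fin_num.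
Proof. by move=> s1; rewrite ge0_fin_numE ?pdiam_ge0 // pdiam_fin. Qed.

Lemma pdiam_meas (b : R) : b < 1 -> measurable_fun `[0%R, b] (pdiam dist mu).
Proof.
move=> b1.
pose f s := fine (pdiam dist mu (Num.min s b)).
have fin s : pdiam dist mu (Num.min s b) \is a fin_num.
  by apply: pdiam_finE; apply: le_lt_trans b1; rewrite ge_min lexx orbT.
have fnd : {homo f : x y / x <= y}.
  move=> x y xy; apply: fine_le => //; apply: pdiam_nd.
  by rewrite le_min !ge_min xy lexx orbT.
apply: (eq_measurable_fun (g := pdiam dist mu) (EFin \o f)).
  move=> x; rewrite inE /= in_itv /= => /andP[_ xb].
  by rewrite /f fineK //; congr pdiam; apply/min_idPl.
apply/measurable_EFinP; exact: nondecreasing_measurable.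
Qed.
End D.

Lemma box_sym {R : realType} {dX dY : measure_display}
  {TX : measurableType dX} {TY : measurableType dY}
  (distX : TX -> TX -> R) (muX : probability TX R)
  (distY : TY -> TY -> R) (muY : probability TY R) e :
  box_cond distX muX distY muY e -> box_cond distY muY distX muX e.
Proof.
case=> e0 [phi [psi [I0 [hphi hpsi hI lI hd]]]]; split => //.
exists psi, phi, I0; split => // s t Is It; rewrite distrC; exact: hd.
Qed.

Lemma cross_box {R : realType} {dX dY : measure_display}
  {TX : measurableType dX} {TY : measurableType dY}
  (distX : TX -> TX -> R) (muX : probability TX R)
  (distY : TY -> TY -> R) (muY : probability TY R) e :
  is_metric distX -> borel_of_dist distX ->
  box_cond distX muX distY muY e -> forall t,
  (pdiam distX muX t <= pdiam distY muY (t + e) + e%:E)%E.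
Proof.
move=> hm hb [e0 [phi [psi [I0 [hphi hpsi [mI sI] lI hd]]]]] t.
rewrite -leeBlDr //; apply: le_ereal_inf_tmp => _ [A [mA hA] <-].
rewrite leeBlDr //.
exact: (cross_set distX muX distY muY hm hb phi psi I0 e hphi hpsi e0 mI sI lI hd A t mA hA).
Qed.
Theorem lemma3p8 (R : realType) (Delta : R) (hD0 : 0 < Delta) (hD1 : Delta < 1)
  (dX : measure_display) (TX : measurableType dX)
  (distX : TX -> TX -> R) (muX : probability TX R)
  (hX : is_mmspace distX muX) (hXD : in_XDelta muX Delta) :
  forall eps : R, 0 < eps ->
  exists2 delta : R, 0 < delta &
  forall (dY : measure_display) (TY : measurableType dY)
    (distY : TY -> TY -> R) (muY : probability TY R),
    is_mmspace distY muY -> in_XDelta muY Delta ->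
    (box_dist distX muX distY muY < delta%:E)%E ->
    (`|rDelta distX muX Delta - rDelta distY muY Delta| < eps%:E)%E.
Proof.
move=> eps eps0.
case: hX => hmX _ _ hbX _.
set c := (Delta + 1) / 2.
have c0 : 0 < c by rewrite /c divr_gt0 // addr_gt0.
have c1 : c < 1 by rewrite /c ltr_pdivrMr // mul1r; lra.
set h0 := (1 - c) / 3.
have h00 : 0 < h0 by rewrite /h0 divr_gt0 // subr_gt0.
have ch0 : c + 2 * h0 < 1 by rewrite /h0; lra.
have finX := pdiam_finE distX muX hmX hbX _ ch0.
set M := fine (pdiam distX muX (c + 2 * h0)).
have EM : pdiam distX muX (c + 2 * h0) = M%:E by rewrite /M fineK.
have M0 : 0 <= M by rewrite -lee_fin -EM pdiam_ge0.
set K := 2 * (M + h0) + c.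
have K0 : 0 < K by rewrite /K; lra.
set N := (Num.truncn (c * K / eps + c / h0)).+1.
have N0 : (0 < N)%N by [].
have NR0 : 0 < N%:R :> R by rewrite ltr0n.
have HN : c * K / eps + c / h0 < N%:R by apply: truncnS_gt.
have t1 : 0 <= c * K / eps by apply: divr_ge0; [apply: mulr_ge0; apply: ltW | apply: ltW].
have t2 : 0 <= c / h0 by apply: divr_ge0; apply: ltW.
set h := c / N%:R.
have h0' : 0 < h by rewrite /h divr_gt0.
have HN2 : c / h0 < N%:R by lra.
have HN1 : c * K / eps < N%:R by lra.
have hh0 : h <= h0.
  by rewrite /h ler_pdivrMr // mulrC; apply: ltW; rewrite -ltr_pdivrMr.
have hK : h * K < eps.
  by rewrite /h mulrAC ltr_pdivrMr // [eps * _]mulrC -ltr_pdivrMr.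
exists h => // dY TY distY muY hY _ hbd.
case: hY => hmY _ _ hbY _.
have [_ [e bc <-] eh] := ereal_inf_lt hbd.
rewrite lte_fin in eh.
have e0 : 0 <= e by case: bc.
have bc' := @box_sym _ _ _ _ _ distX muX distY muY e bc.
have cXY := @cross_box _ _ _ _ _ distX muX distY muY e hmX hbX bc.
have cYX := @cross_box _ _ _ _ _ distY muY distX muX e hmY hbY bc'.
set FX := pdiam distX muX.
set FY := pdiam distY muY.
have mFX := pdiam_meas distX muX hmX hbX _ c1.
have mFY := pdiam_meas distY muY hmY hbY _ c1.
have FXnd : {homo FX : s t / s <= t >-> (s <= t)%E} by move=> s t; apply: pdiam_nd.
have FYnd : {homo FY : s t / s <= t >-> (s <= t)%E} by move=> s t; apply: pdiam_nd.
have FX0 : forall s, (0 <= FX s)%E by move=> s; apply: pdiam_ge0.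
have FY0 : forall s, (0 <= FY s)%E by move=> s; apply: pdiam_ge0.
have eh' : e <= c / N%:R by apply: ltW.
have B1 := @int_cmp _ FY FX c e N c0 N0 e0 eh' FY0 FX0 FYnd FXnd mFY mFX cXY.
have B2 := @int_cmp _ FX FY c e N c0 N0 e0 eh' FX0 FY0 FXnd FYnd mFX mFY cYX.
rewrite -/h in B1 B2.
have FXb : forall s, s <= c + 2 * h0 -> (FX s <= M%:E)%E.
  by move=> s hs; rewrite -EM; apply: FXnd.
have FYb : forall s, s <= c + h -> (FY s <= (M + h0)%:E)%E.
  move=> s hs; apply: le_trans (cYX s) _; rewrite EFinD; apply: leeD.
    by apply: FXb; lra.
  by rewrite lee_fin; lra.
have hE : (0 <= h%:E)%E by rewrite lee_fin ltW.
have B1' : (\int[lebesgue_measure]_(x in `[0%R, c]) FX x <=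
    \int[lebesgue_measure]_(x in `[0%R, c]) FY x + ((M + h0) * h)%:E + ((M + h0) * h)%:E + (c * e)%:E)%E.
  apply: le_trans B1 _; apply: leeD; last exact: lexx.
  rewrite !EFinM; apply: leeD; first apply: leeD; first exact: lexx.
  - by apply: lee_wpmul2r => //; apply: FYb; lra.
  - by apply: lee_wpmul2r => //; apply: FYb; lra.
have B2' : (\int[lebesgue_measure]_(x in `[0%R, c]) FY x <=
    \int[lebesgue_measure]_(x in `[0%R, c]) FX x + (M * h)%:E + (M * h)%:E + (c * e)%:E)%E.
  apply: le_trans B2 _; apply: leeD; last exact: lexx.
  rewrite !EFinM; apply: leeD; first apply: leeD; first exact: lexx.
  - by apply: lee_wpmul2r => //; apply: FXb; lra.
  - by apply: lee_wpmul2r => //; apply: FXb; lra.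
have IX0 : (0 <= \int[lebesgue_measure]_(x in `[0%R, c]) FX x)%E by apply: integral_ge0.
have IXf : (\int[lebesgue_measure]_(x in `[0%R, c]) FX x < +oo)%E.
  have Db : forall x, `[0%R, c]%classic x -> x <= c by move=> x; rewrite /= in_itv /= => /andP[].
  have := @int_le_cst R FX _ c (measurable_itv _) Db FX0 FXnd mFX.
  move/le_lt_trans; apply.
  rewrite lebesgue_measure_itv /= lte_fin c0 /= oppr0 adde0.
  have cE : (0 <= c%:E)%E by rewrite lee_fin ltW.
  apply: le_lt_trans (lee_wpmul2r cE (FXb c _)) _; first lra.
  by rewrite -EFinM ltry.
rewrite /rDelta -/c -/FX -/FY.
move: B1' B2' IX0 IXf.
case: (\int[lebesgue_measure]_(x in `[0%R, c]) FX x)%E => [x| |] //;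
case: (\int[lebesgue_measure]_(x in `[0%R, c]) FY x)%E => [y| |] //.
rewrite -!EFinD !lee_fin => b1 b2 _ _.
rewrite abse_EFin lte_fin ltr_norml.
have ce : c * e <= c * h by rewrite ler_wpM2l // ltW.
have Mh : (M + h0) * h = M * h + h0 * h by rewrite mulrDl.
have h0h : 0 <= h0 * h by rewrite mulr_ge0 // ltW.
have hKe : h * K = 2 * ((M + h0) * h) + c * h by rewrite /K; ring.
apply/andP; split; lra.
Qed.
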